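(* Let $p$ be a prime, let $B$ be a nontrivial finite $p$-group and let $r\ge2$ be an integer. Then there are sequences $(G_n)$, $(H_n)$ of finite $p$-groups with $|G_n|\to\infty$, $|H_n|\to\infty$ and $a(G_n\wr H_n)\to p^r a(B)$.
   Context: For a finite group $G$, the average order is $a(G)=\frac{1}{|G|}\sum_{g\in G}\mathrm{order}(g)$. For groups $A,B$, let $K=\prod_{b\in B}A$, on which $B$ acts by $x\cdot(\alpha_b)_b=(\alpha_{x^{-1}b})_b$ for $x\in B$; the wreath product $A\wr B$ is the semidirect product $K\rtimes B$ for this action. *)

(* Defs.v *)
From HB Require Import structures.
From mathcomp Require Import all_boot all_order all_algebra all_fingroup all_solvable.
Set Implicit Arguments. Unset Strict Implicit. Unset Printing Implicit Defensive.
Import GRing.Theory Num.Theory.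

(* Wreath product A wr B = K ⋊ B, K = {ffun B -> A}, with the action
   (x . alpha)_b = alpha_(x^-1 b); hence
   (f1, b1) * (f2, b2) = (fun c => f1 c * f2 (b1^-1 * c), b1 * b2). *)
Definition wreath (aT bT : finGroupType) : Type := ({ffun bT -> aT} * bT)%type.
HB.instance Definition _ (aT bT : finGroupType) := Finite.on (wreath aT bT).

Section Wreath.
Variables aT bT : finGroupType.
Local Open Scope group_scope.
Implicit Types u v w : wreath aT bT.

Definition wr_mul u v : wreath aT bT :=
  ([ffun c => u.1 c * v.1 (u.2^-1 * c)], u.2 * v.2).
Definition wr_one : wreath aT bT := ([ffun => 1], 1).
Definition wr_inv u : wreath aT bT :=
  ([ffun c => (u.1 (u.2 * c))^-1], u.2^-1).

Lemma wr_mulA : associative wr_mul.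
Proof.
move=> [f1 b1] [f2 b2] [f3 b3]; rewrite /wr_mul /=; congr (_, _).
  by apply/ffunP=> c; rewrite !ffunE /= invMg -!mulgA.
by rewrite mulgA.
Qed.

Lemma wr_mul1 : left_id wr_one wr_mul.
Proof.
move=> [f b]; rewrite /wr_mul /=; congr (_, _); last by rewrite mul1g.
by apply/ffunP=> c; rewrite !ffunE invg1 !mul1g.
Qed.

Lemma wr_mulV : left_inverse wr_one wr_inv wr_mul.
Proof.
move=> [f b]; rewrite /wr_mul /wr_one /=; congr (_, _); last by rewrite mulVg.
by apply/ffunP=> c; rewrite !ffunE /= invgK mulVg.
Qed.

HB.instance Definition _ :=
  Finite_isGroup.Build (wreath aT bT) wr_mulA wr_mul1 wr_mulV.
End Wreath.

Notation "A \wr B" := (wreath A B) (at level 40, left associativity).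

Definition avg_order (gT : finGroupType) (A : {set gT}) : rat :=
  (((\sum_(x in A) #[x]%g)%N)%:R / (#|A|)%:R)%R.

Definition converges_to (u : nat -> rat) (l : rat) : Prop :=
  forall eps : rat, (0 < eps)%R -> exists N : nat, forall n, (N <= n)%N -> (`|u n - l| < eps)%R.

Definition tends_to_infty (u : nat -> nat) : Prop :=
  forall M : nat, exists N : nat, forall n, (N <= n)%N -> (M <= u n)%N.

(* Main.v *)
From HB Require Import structures.
Require Import Defs.
From mathcomp Require Import all_boot all_order all_algebra all_fingroup all_solvable.
From mathcomp Require Import ring lra.
Import GRing.Theory Num.Theory.
Import Order.TTheory.
Set Implicit Arguments. Unset Strict Implicit. Unset Printing Implicit Defensive.

Section Pw.
Variables (C : finGroupType) (n : nat).
Local Open Scope group_scope.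
Definition pw : Type := {ffun 'I_n -> C}.
HB.instance Definition _ := Finite.on pw.
Definition pw_mul (u v : pw) : pw := [ffun i => u i * v i].
Definition pw_one : pw := [ffun => 1].
Definition pw_inv (u : pw) : pw := [ffun i => (u i)^-1].
Lemma pw_mulA : associative pw_mul.
Proof. by move=> u v w; apply/ffunP=> i; rewrite !ffunE mulgA. Qed.
Lemma pw_mul1 : left_id pw_one pw_mul.
Proof. by move=> u; apply/ffunP=> i; rewrite !ffunE mul1g. Qed.
Lemma pw_mulV : left_inverse pw_one pw_inv pw_mul.
Proof. by move=> u; apply/ffunP=> i; rewrite !ffunE mulVg. Qed.
HB.instance Definition _ := Finite_isGroup.Build pw pw_mulA pw_mul1 pw_mulV.

Lemma pw_expg (u : pw) k : u ^+ k = [ffun i => u i ^+ k] :> pw.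
Proof.
elim: k => [|k IH]; first by apply/ffunP=> i; rewrite !ffunE.
rewrite expgSr IH; apply/ffunP=> i; rewrite /mulg /=.
by rewrite /pw_mul !ffunE expgSr.
Qed.

Lemma card_pw : #|[set: pw]| = (#|C| ^ n)%N.
Proof. by rewrite cardsT card_ffun card_ord. Qed.
End Pw.

Section Wr.
Variables (X Y : finGroupType).
Local Open Scope group_scope.

Lemma prodg_const (x : X) k : \prod_(i < k) x = x ^+ k.
Proof. by elim: k => [|k IH]; rewrite ?big_ord0 ?expg0 // big_ord_recr IH expgSr. Qed.

Lemma wr_mulE (u v : X \wr Y) : u * v = wr_mul u v.
Proof. by []. Qed.

Lemma wr_expg (f : {ffun Y -> X}) (h : Y) k :
  ((f, h) : X \wr Y) ^+ k = ([ffun c => \prod_(i < k) f ((h ^+ i)^-1 * c)], h ^+ k).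
Proof.
elim: k => [|k IH].
  by rewrite expg0; congr (_, _); apply/ffunP=> c; rewrite !ffunE big_ord0.
rewrite expgSr IH wr_mulE /wr_mul /=; congr (_, _).
  by apply/ffunP=> c; rewrite !ffunE big_ord_recr.
by rewrite expgSr.
Qed.
End Wr.

Section WrOrder.
Variables (X Y : finGroupType) (p : nat).
Hypothesis pr_p : prime p.
Hypothesis hX : forall x : X, (x ^+ p)%g = 1%g.
Local Open Scope group_scope.

Definition F1 (h : Y) (f : {ffun Y -> X}) := \prod_(i < #[h]) f ((h ^+ i)^-1 * 1).

Lemma wr_pow_order (f : {ffun Y -> X}) (h : Y) :
  ((f, h) : X \wr Y) ^+ #[h] = ([ffun c => \prod_(i < #[h]) f ((h ^+ i)^-1 * c)], 1).
Proof. by rewrite wr_expg expg_order. Qed.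

Lemma wr_one_pow (F : {ffun Y -> X}) q :
  ((F, 1) : X \wr Y) ^+ q = ([ffun c => F c ^+ q], 1).
Proof.
rewrite wr_expg expg1n; congr (_, _); apply/ffunP=> c; rewrite !ffunE -prodg_const.
by apply: eq_bigr => i _; rewrite expg1n invg1 mul1g.
Qed.

Lemma wr_order_le (f : {ffun Y -> X}) (h : Y) : (#[(f, h) : X \wr Y] <= #[h] * p)%N.
Proof.
apply: dvdn_leq; first by rewrite muln_gt0 order_gt0 prime_gt0.
rewrite order_dvdn expgM wr_pow_order wr_one_pow; apply/eqP.
congr (_, _); apply/ffunP=> c; rewrite !ffunE; exact: hX.
Qed.

Lemma wr_order_ge (f : {ffun Y -> X}) (h : Y) : F1 h f != 1 -> (#[h] * p <= #[(f, h) : X \wr Y])%N.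
Proof.
move=> nF.
set w := ((f, h) : X \wr Y).
have ew := expg_order w.
have dh : (#[h] %| #[w])%N.
  rewrite order_dvdn; apply/eqP.
  by have := congr1 snd ew; rewrite /w wr_expg.
apply: dvdn_leq; first exact: order_gt0.
move: ew; rewrite -(divnK dh) mulnC expgM /w wr_pow_order wr_one_pow.
set q := (#[w] %/ #[h])%N.
move/(congr1 (fun u : X \wr Y => u.1 1)); rewrite /= !ffunE => eq1.
have dq : (#[F1 h f] %| q)%N by rewrite order_dvdn; apply/eqP.
have dp : (#[F1 h f] %| p)%N by rewrite order_dvdn hX.
have ne1 : #[F1 h f] != 1%N by rewrite order_eq1.
have := prime_nt_dvdP pr_p ne1; move/(_ dp) => ep.
by rewrite dvdn_pmul2l ?order_gt0 // -ep.
Qed.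
End WrOrder.

Section Count.
Variables (X Y : finGroupType).
Local Open Scope group_scope.

Lemma card_fix1 : (#|[set g : {ffun Y -> X} | g 1%g == 1%g]| * #|X| = #|X| ^ #|Y|)%N.
Proof.
set S := [set g : {ffun Y -> X} | g 1%g == 1%g].
pose psi (f : {ffun Y -> X}) : {ffun Y -> X} := [ffun c => if c == 1 then 1 else f c].
pose chi (f : {ffun Y -> X}) := (psi f, f 1).
have chi_inj : injective chi.
  move=> f g [e1 e2]; apply/ffunP=> c.
  have := congr1 (fun u : {ffun Y -> X} => u c) e1; rewrite /= !ffunE.
  by case: eqP => [->|] //.
rewrite -card_ffun -(cardsT {ffun Y -> X}) -(cardsT X) -cardsX -(card_imset _ chi_inj).
apply: (congr1 (fun A : {set _} => #|A|)); apply/setP=> -[g x]; rewrite !inE andbT.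
apply/idP/imsetP => [g1|[f _ [-> _]]]; last first.
  by rewrite /psi ffunE eqxx.
exists [ffun c => if c == 1 then x else g c]; rewrite ?inE // /chi /psi.
rewrite ffunE eqxx; congr (_, _); apply/ffunP=> c; rewrite !ffunE.
by case: eqP => // ->; rewrite (eqP g1).
Qed.

Definition Rr (h : Y) (f : {ffun Y -> X}) := \prod_(i < #[h].-1) f ((h ^+ i.+1)^-1 * 1).

Lemma F1_split h f : F1 h f = f 1 * Rr h f.
Proof.
rewrite /F1 /Rr; move: (order_gt0 h); case: #[h] => // m _ /=.
by rewrite big_ord_recl /= expg0 invg1 mul1g.
Qed.

Lemma Rr_ne1 (h : Y) (i : 'I_#[h].-1) : (h ^+ i.+1)^-1 * 1 != 1.
Proof.
rewrite mulg1 invg_eq1 -order_dvdn; apply/negP => /(dvdn_leq (ltn0Sn _)).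
move: (ltn_ord i) (order_gt0 h); move: (nat_of_ord i) => j; case: #[h] => // m lt1 _ le2 /=.
by have := leq_trans le2 lt1; rewrite ltnn.
Qed.

Lemma card_bad (h : Y) :
  (#|[set f : {ffun Y -> X} | F1 h f == 1%g]| * #|X| = #|X| ^ #|Y|)%N.
Proof.
pose phi (f : {ffun Y -> X}) : {ffun Y -> X} := [ffun c => if c == 1 then F1 h f else f c].
have Rphi f : Rr h (phi f) = Rr h f.
  by apply: eq_bigr => i _; rewrite ffunE (negbTE (Rr_ne1 i)).
have phi_inj : injective phi.
  move=> f g e.
  have off c : c != 1 -> f c = g c.
    move=> nc; have := congr1 (fun u : {ffun Y -> X} => u c) e.
    by rewrite /= !ffunE (negbTE nc).
  have eR : Rr h f = Rr h g by apply: eq_bigr => i _; apply: off; exact: Rr_ne1.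
  have := congr1 (fun u : {ffun Y -> X} => u 1) e; rewrite /= !ffunE eqxx.
  rewrite !F1_split eR => /mulIg e1.
  apply/ffunP=> c; case: (eqVneq c 1) => [->|] //; exact: off.
have -> : [set f : {ffun Y -> X} | F1 h f == 1%g] = phi @^-1: [set g : {ffun Y -> X} | g 1%g == 1%g].
  by apply/setP=> f; rewrite !inE ffunE eqxx.
by rewrite card_preimset // card_fix1.
Qed.
End Count.

Lemma sum_setT (T : finType) (F : T -> nat) :
  (\sum_(x in [set: T]) F x = \sum_x F x)%N.
Proof. by apply: eq_bigl => x; rewrite in_setT. Qed.

Section WrSum.
Variables (X Y : finGroupType) (p : nat).
Hypothesis pr_p : prime p.
Hypothesis hX : forall x : X, (x ^+ p)%g = 1%g.
Local Open Scope group_scope.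

Lemma wr_sum_eq (F : X \wr Y -> nat) :
  (\sum_(w in [set: X \wr Y]) F w = \sum_(h : Y) \sum_(f : {ffun Y -> X}) F (f, h))%N.
Proof.
rewrite (eq_bigl predT) => [|w]; last by rewrite in_setT.
have -> : (\sum_(w : X \wr Y) F w = \sum_(u : {ffun Y -> X} * Y) F (u.1, u.2))%N.
  by apply: eq_bigr => -[].
by rewrite -(pair_bigA _ (fun f h => F (f, h))) exchange_big.
Qed.

Lemma wr_sum_le :
  (\sum_(w in [set: X \wr Y]) #[w] <= #|X| ^ #|Y| * ((\sum_(y in [set: Y]) #[y]) * p))%N.
Proof.
rewrite wr_sum_eq sum_setT.
rewrite big_distrl /= big_distrr /=; apply: leq_sum => h _.
apply: leq_trans (_ : \sum_(f : {ffun Y -> X}) (#[h] * p) <= _)%N.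
  by apply: leq_sum => f _; exact: wr_order_le.
by rewrite sum_nat_const card_ffun.
Qed.

Lemma wr_sum_ge :
  ((#|X| ^ #|Y| - #|X| ^ #|Y| %/ #|X|) * ((\sum_(y in [set: Y]) #[y]) * p)
     <= \sum_(w in [set: X \wr Y]) #[w])%N.
Proof.
rewrite wr_sum_eq sum_setT.
rewrite big_distrl /= big_distrr /=; apply: leq_sum => h _.
set Bad := [set f : {ffun Y -> X} | F1 h f == 1%g].
have cB : #|Bad| = (#|X| ^ #|Y| %/ #|X|)%N.
  by rewrite -(@card_bad X Y h) mulnK // (cardD1 1%g).
have cC : #|~: Bad| = (#|X| ^ #|Y| - #|X| ^ #|Y| %/ #|X|)%N.
  by rewrite -cB -card_ffun -(cardsC Bad) addKn.
apply: leq_trans (_ : \sum_(f in ~: Bad) (#[h] * p) <= _)%N.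
  by rewrite sum_nat_const cC.
rewrite [X in (_ <= X)%N](bigID (fun f => f \in ~: Bad)) /=.
apply: leq_trans (leq_addr _ _); apply: leq_sum => f.
rewrite !inE => nF; exact: wr_order_ge.
Qed.
End WrSum.

Section WrAvg.
Variables (X Y : finGroupType) (p : nat).
Hypothesis pr_p : prime p.
Hypothesis hX : forall x : X, (x ^+ p)%g = 1%g.
Local Open Scope ring_scope.

Lemma card_wr : #|[set: X \wr Y]| = (#|X| ^ #|Y| * #|Y|)%N.
Proof.
rewrite cardsT; apply: (etrans (card_prod {ffun Y -> X} Y)).
by rewrite card_ffun.
Qed.

Lemma cardT_gt0 (T : finGroupType) : (0 < #|T|)%N.
Proof. by rewrite (cardD1 1%g). Qed.

Lemma avg_ge0 (T : finGroupType) (A : {set T}) : 0 <= avg_order A.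
Proof. by rewrite /avg_order divr_ge0 ?ler0n. Qed.

Lemma wr_avg_le : avg_order [set: X \wr Y] <= p%:R * avg_order [set: Y].
Proof.
rewrite /avg_order card_wr cardsT.
set S := (\sum_(w in _) _)%N; set A := (\sum_(y in _) _)%N.
have hT : (0 < #|X| ^ #|Y|)%N by rewrite expn_gt0 cardT_gt0.
have hY := cardT_gt0 Y.
rewrite ler_pdivrMr ?ltr0n ?muln_gt0 ?hT //.
have -> : p%:R * (A%:R / #|Y|%:R) * (#|X| ^ #|Y| * #|Y|)%N%:R
   = ((#|X| ^ #|Y| * (A * p))%N%:R : rat).
  rewrite !natrM; field; by rewrite pnatr_eq0 -lt0n.
by rewrite ler_nat; exact: wr_sum_le.
Qed.

Lemma wr_avg_ge :
  p%:R * (1 - (#|X|%:R)^-1) * avg_order [set: Y] <= avg_order [set: X \wr Y].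
Proof.
rewrite /avg_order card_wr cardsT.
set A := (\sum_(w in _) _)%N; set S := (\sum_(y in _) _)%N.
have hX0 := cardT_gt0 X.
have hT : (0 < #|X| ^ #|Y|)%N by rewrite expn_gt0 cardT_gt0.
have hY := cardT_gt0 Y.
rewrite ler_pdivlMr ?ltr0n ?muln_gt0 ?hT //.
have dv : (#|X| %| #|X| ^ #|Y|)%N by apply: dvdn_exp.
have -> : p%:R * (1 - (#|X|%:R)^-1) * (A%:R / #|Y|%:R) * (#|X| ^ #|Y| * #|Y|)%N%:R
   = (((#|X| ^ #|Y| - #|X| ^ #|Y| %/ #|X|) * (A * p))%N%:R : rat).
  rewrite !natrM natrB ?leq_div // natf_div //; field.
  by rewrite !pnatr_eq0 -!lt0n hY hX0.
by rewrite ler_nat; exact: wr_sum_ge.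
Qed.
End WrAvg.

Definition E (p n : nat) : finGroupType := pw 'Z_p n.

Lemma E_exp p n : prime p -> forall x : E p n, (x ^+ p)%g = 1%g.
Proof.
move=> pr x; rewrite pw_expg; apply/ffunP=> i; rewrite !ffunE.
have := expg_cardG (in_setT (x i)); rewrite cardsT card_ord Zp_cast ?prime_gt1 //.
Qed.

Lemma card_E p n : prime p -> #|[set: E p n]| = (p ^ n)%N.
Proof. by move=> pr; rewrite card_pw card_ord Zp_cast ?prime_gt1. Qed.

Fixpoint iterW (bT : finGroupType) (B : {group bT}) (p n k : nat) : finGroupType :=
  if k is k'.+1 then (E p n \wr iterW B p n k') else [subg B].

Section Arith.
Local Open Scope ring_scope.
Lemma step_arith (p c aY aW d : rat) (k : nat) :
  0 <= p -> 0 <= c -> 0 <= d -> d <= 1 ->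
  c * (1 - k%:R * d) <= aY -> aY <= c -> aW <= p * aY -> p * (1 - d) * aY <= aW ->
  p * c * (1 - (k%:R + 1) * d) <= aW /\ aW <= p * c.
Proof.
move=> p0 c0 d0 d1 h1 h2 h3 h4; split; last first.
  by apply: (le_trans h3); rewrite ler_wpM2l.
apply: le_trans h4.
have q0 : 0 <= p * (1 - d) by rewrite mulr_ge0 // subr_ge0.
have := ler_wpM2l q0 h1 => h5; apply: le_trans h5.
have k0 : (0 : rat) <= k%:R by rewrite ler0n.
have e : p * c * (1 - (k%:R + 1) * d) = p * (1 - d) * (c * (1 - k%:R * d)) - p * c * k%:R * d * d.
  by ring.
rewrite e lerBlDr lerDl; apply: mulr_ge0 => //; apply: mulr_ge0 => //.
by apply: mulr_ge0 => //; apply: mulr_ge0.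
Qed.
End Arith.

Section Iter.
Variables (bT : finGroupType) (B : {group bT}) (p : nat).
Hypothesis pr_p : prime p.
Hypothesis pB : (p.-group B)%g.
Local Open Scope ring_scope.

Lemma iter_pgroup n k : (p.-group [set: iterW B p n k])%g.
Proof.
elim: k => [|k IH] /=.
  by rewrite /pgroup (isom_card (isom_sgval B)).
rewrite /pgroup card_wr pnatM -!cardsT; rewrite (pgroupE _ [set: iterW B p n k]) in IH.
rewrite IH andbT pnatX card_E // pnatX pnat_id //.
Qed.

Lemma avg_subg : avg_order [set: [subg B]] = avg_order B.
Proof.
rewrite /avg_order (isom_card (isom_sgval B)); congr (_%:R / _).
rewrite (reindex (@sgval _ B)) /=; last first.
  by exists (subg B) => [x _ | y yB]; [exact: sgvalK | exact: subgK].
rewrite sum_setT; apply: eq_big => [x|x _]; first by rewrite subgP.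
by rewrite (order_injm (injm_sgval B)) ?in_setT.
Qed.

Lemma iter_bounds n k :
  (p ^ k)%:R * avg_order B * (1 - k%:R / (p ^ n)%:R) <= avg_order [set: iterW B p n k]
  /\ avg_order [set: iterW B p n k] <= (p ^ k)%:R * avg_order B.
Proof.
have a0 := avg_ge0 B.
have pn0 : (0 : rat) < (p ^ n)%:R by rewrite ltr0n expn_gt0 prime_gt0.
have dle : (p ^ n)%:R^-1 <= (1 : rat).
  by rewrite invf_le1 // ler1n expn_gt0 prime_gt0.
elim: k => [|k [IH1 IH2]] /=.
  by rewrite avg_subg expn0 mul1r mul0r subr0 mulr1 Order.POrderTheory.lexx.
have le := @wr_avg_le (E p n) (iterW B p n k) p pr_p (@E_exp p n pr_p).
have ge := @wr_avg_ge (E p n) (iterW B p n k) p pr_p (@E_exp p n pr_p).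
rewrite -cardsT card_E // in ge.
have dpos : (0:rat) <= (p ^ n)%:R^-1 by rewrite invr_ge0 ltW.
have := @step_arith p%:R ((p ^ k)%:R * avg_order B) _ _ ((p ^ n)%:R^-1) k
  (ler0n _ _) (mulr_ge0 (ler0n _ _) a0) dpos dle IH1 IH2 le ge.
move=> H; have -> : (k.+1)%:R = k%:R + 1 :> rat by rewrite natr1.
rewrite expnS natrM; rewrite !mulrA in H *; exact: H.
Qed.
End Iter.

Unset Implicit Arguments.
Set Strict Implicit.

Theorem corollary7p1 (p : nat) (bT : finGroupType) (B : {group bT}) (r : nat) :
  prime p -> (p.-group B)%g -> (B :!=: 1)%g -> (2 <= r)%N ->
  exists (gT hT : nat -> finGroupType),
    [/\ forall n, (p.-group [set: gT n])%g,
        forall n, (p.-group [set: hT n])%g,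
        tends_to_infty (fun n => #|[set: gT n]|),
        tends_to_infty (fun n => #|[set: hT n]|) &
        converges_to (fun n => avg_order [set: gT n \wr hT n])
                     ((p ^ r)%:R * avg_order B)%R].
Proof.
move=> pr pB _ r2.
case: r r2 => // r' r2.
exists (fun n => E p n), (fun n => iterW B p n r'); split.
- by move=> n; rewrite /pgroup card_E // pnatX pnat_id.
- by move=> n; exact: iter_pgroup.
- move=> M; exists M => n leMn; rewrite card_E //.
  exact: leq_trans leMn (ltnW (ltn_expl n (prime_gt1 pr))).
- move=> M; exists M => n leMn.
  case: r' r2 => // r'' _ /=.
  rewrite card_wr -(cardsT (E p n)) card_E //.
  apply: (leq_trans leMn); apply: (leq_trans (ltnW (ltn_expl n (prime_gt1 pr)))).
  apply: (leq_trans _ (leq_pmulr _ (cardT_gt0 _))).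
  rewrite -{1}(expn1 (p ^ n)); apply: leq_pexp2l; first by rewrite expn_gt0 prime_gt0.
  exact: cardT_gt0.
move=> eps eps0.
set L := ((p ^ r'.+1)%:R * avg_order B)%R.
set c := (L * (r'.+1)%:R)%R.
have L0 : (0 <= L)%R by rewrite mulr_ge0 ?ler0n ?avg_ge0.
have c0 : (0 <= c)%R by rewrite mulr_ge0 ?ler0n.
have ce0 : (0 <= c / eps)%R by rewrite divr_ge0 // ltW.
exists (Num.Def.archi_bound (c / eps)) => n leNn.
have [lo hi] := iter_bounds B pr n r'.+1.
set u := avg_order [set: iterW B p n r'.+1] in lo hi.
change (`|u - L| < eps)%R.
rewrite distrC ger0_norm ?subr_ge0 //.
have pn0 : ((0 : rat) < (p ^ n)%:R)%R by rewrite ltr0n expn_gt0 prime_gt0.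
have h1 : (L - u <= c / (p ^ n)%:R)%R.
  rewrite lerBlDr -lerBlDl; apply: le_trans lo; rewrite /c.
  by rewrite -/L mulrBr mulr1 mulrA.
apply: le_lt_trans h1 _.
rewrite ltr_pdivrMr //.
have h2 : (c / eps < n%:R)%R.
  apply: lt_le_trans (archi_boundP ce0) _; by rewrite ler_nat.
have h3 : ((n%:R : rat) < (p ^ n)%:R)%R by rewrite ltr_nat ltn_expl // prime_gt1.
rewrite ltr_pdivrMr // in h2.
apply: lt_le_trans h2 _; rewrite mulrC ler_wpM2l ?ltW //.
Qed.
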